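(* Let $p=3$. Let $\tau_1=(\tau_1(i))_{1\le i\le 4}$ be an assigned family of four abelian type invariants (types of finite abelian $3$-groups). Then the set $\mathrm{Cnt}_3^2((1^2),\tau_1)$ of isomorphism classes of finite metabelian $3$-groups $\mathfrak{M}$ such that $\mathfrak{M}/\mathfrak{M}'$ is of type $(1^2)$, i.e. $\mathfrak{M}/\mathfrak{M}'\simeq C_3\times C_3$, and $\tau_1\mathfrak{M}=(H/H')_{H\in\mathrm{Lyr}_1\mathfrak{M}}\simeq\tau_1$ (as families of abelian type invariants, up to reordering) is finite.
   Context: For a finite $p$-group (or pro-$p$ group) $G$ with $G/G'$ finite and $n\ge 0$, $\mathrm{Lyr}_n G$ denotes the set of subgroups $H$ with $G'\le H\le G$ and $(G:H)=p^n$. For $G/G'$ of type $(p,p)$, $\mathrm{Lyr}_1 G$ consists of the $p+1$ maximal subgroups of $G$. Abelian type invariants are written in logarithmic notation: a type $(a_1,a_2,\dots)$ with $a_1\ge a_2\ge\dots$ stands for $C_{p^{a_1}}\times C_{p^{a_2}}\times\cdots$, e.g. $21$ means $C_9\times C_3$, $1^2$ means $C_3\times C_3$, $1^3$ means $C_3^3$; an exponent on a parenthesized type such as $(21)^3$ denotes that many repeated components. *)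

(* Defs.v *)
From mathcomp Require Import all_boot all_fingroup all_solvable.
Set Implicit Arguments. Unset Strict Implicit. Unset Printing Implicit Defensive.
Local Open Scope group_scope.

(* Abelian type invariant in logarithmic notation, e.g. [:: 2; 1] = C_9 x C_3. *)
Definition log_abelian_type (p : nat) (gT : finGroupType) (A : {set gT}) : seq nat :=
  map (logn p) (abelian_type A).

Definition Lyr (p n : nat) (gT : finGroupType) (G : {group gT}) : {set {group gT}} :=
  [set H : {group gT} | [&& G^`(1) \subset H, H \subset G & #|G : H| == (p ^ n)%N]].

(* tau_1 G ~ tau (as families, up to reordering): for every type t, the number
   of H in Lyr_1 G with H/H' of type t equals the multiplicity of t in tau. *)
Definition tau1_matches (p : nat) (gT : finGroupType) (G : {group gT})
    (tau : 4.-tuple (seq nat)) : Prop :=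
  forall t : seq nat,
    #|[set H in Lyr p 1 G | log_abelian_type p (H / H^`(1)) == t]| = count_mem t tau.

Definition in_Cnt (p : nat) (tau : 4.-tuple (seq nat)) (gT : finGroupType) (G : {group gT}) : Prop :=
  [/\ p.-group G, G^`(2) = 1,
      log_abelian_type p (G / G^`(1)) = [:: 1%N; 1%N] & tau1_matches p G tau].

(* Main.v *)
Require Import Defs.
From mathcomp Require Import all_boot all_algebra all_fingroup all_solvable.
From mathcomp Require Import zify.
Set Implicit Arguments. Unset Strict Implicit. Unset Printing Implicit Defensive.
Import GRing.Theory.
Local Open Scope ring_scope.

Lemma zt1 (V : zmodType) (a b c d : V) : (a - b - (c - d) = a - c - (b - d))%R.
Proof. by rewrite !opprB !addrA (addrAC a (-b)) (addrAC a (-c)) [RHS]addrAC. Qed.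
Lemma zt2 (V : zmodType) (u u1 u2 : V) : ((u1 + u2 + u) - (u + u1 + u2) = 0)%R.
Proof. by rewrite (addrC _ u) addrA subrr. Qed.
Lemma zt3 (V : zmodType) (u a b c d : V) :
  (d - b - (c - u) = u + a + d - (a + b + c))%R.
Proof.
by rewrite opprB !opprD !addrA (addrAC u a d) addrK (addrAC d (-b) u) (addrC d u).
Qed.

Local Open Scope group_scope.
Lemma card_ker_im (aT rT : finGroupType) (D : {group aT}) (f : {morphism D >-> rT})
  (B : {group aT}) : B \subset D -> #|B| = (#|'ker_B f| * #|f @* B|)%N.
Proof.
move=> sBD; rewrite card_morphim (setIidPr sBD) -indexgI.
by rewrite Lagrange // subsetIl.
Qed.

Section Core.
Variables (gT : finGroupType) (G M : {group gT}).
Hypotheses (nMG : G \subset 'N(M)) (sDM : [~: G, G] \subset M) (cMM : abelian M).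

Lemma cM a b : a \in M -> b \in M -> commute a b.
Proof. by move=> Ha Hb; apply: (centsP cMM). Qed.

Lemma nG g : g \in G -> g \in 'N(M).
Proof. exact: (subsetP nMG). Qed.

Lemma MJ v g : v \in M -> g \in G -> v ^ g \in M.
Proof. by move=> Hv Hg; rewrite memJ_norm // nG. Qed.

Lemma fixM v c : v \in M -> c \in M -> v ^ c = v.
Proof. by move=> Hv Hc; apply/conjg_fixP/commgP/cM. Qed.

Lemma conj_comm v g h : v \in M -> g \in G -> h \in G -> v ^ (g * h) = v ^ (h * g).
Proof.
move=> Hv Hg Hh; rewrite (commgC g h) conjgM; apply: fixM.
  by rewrite MJ ?groupM.
by rewrite (subsetP sDM) // mem_commg.
Qed.

Lemma commM v g : v \in M -> g \in G -> [~ v, g] \in M.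
Proof. by move=> Hv Hg; rewrite commgEl groupM ?groupV ?MJ. Qed.

Import FiniteModule.
Local Notation V := (fmod_of cMM).

Lemma aswap (u : V) g h : g \in G -> h \in G -> (u ^@ g ^@ h = u ^@ h ^@ g)%R.
Proof.
move=> Hg Hh; rewrite -!actrM ?nG //; apply: val_inj.
rewrite !fmvalJ ?groupM ?nG //; apply: conj_comm => //; exact: fmodP.
Qed.

Lemma acube (u : V) g : g \in G -> g ^+ 3 \in M -> (u ^@ g ^@ g ^@ g = u)%R.
Proof.
move=> Hg H3; rewrite -!actrM ?groupM ?nG //; apply: val_inj.
rewrite fmvalJ ?groupM ?nG //; have ->: g * (g * g) = g ^+ 3 by rewrite !expgS expg0 mulg1.
by apply: fixM => //; exact: fmodP.
Qed.

Definition Dm g (u : V) := (u ^@ g - u)%R.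
Definition Nm g (u : V) := (u + u ^@ g + u ^@ g ^@ g)%R.

Lemma DB g (a b : V) : Dm g (a - b)%R = (Dm g a - Dm g b)%R.
Proof. by rewrite /Dm actAr actNr zt1. Qed.

Lemma D0 g : Dm g 0 = 0%R.
Proof. by rewrite /Dm act0r subrr. Qed.

Lemma DJ g h (u : V) : g \in G -> h \in G -> Dm g (u ^@ h)%R = ((Dm g u) ^@ h)%R.
Proof. by move=> Hg Hh; rewrite /Dm actAr actNr aswap. Qed.

Lemma DD g h (u : V) : g \in G -> h \in G -> Dm g (Dm h u) = Dm h (Dm g u).
Proof. by move=> Hg Hh; rewrite /Dm !actAr !actNr (aswap _ Hg Hh) zt1. Qed.

Lemma DN g (u : V) : g \in G -> g ^+ 3 \in M -> Dm g (Nm g u) = 0%R.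
Proof. by move=> Hg H3; rewrite /Dm /Nm !actAr acube // zt2. Qed.

Lemma Dkey (u : V) x y : x \in G -> y \in G -> y ^+ 3 \in M ->
  Dm (x * y) (Dm (x * y ^+ 2) u) = (Nm x u - (Nm y u) ^@ x)%R.
Proof.
move=> Hx Hy H3; rewrite /Dm /Nm expg2 !actAr !actNr.
rewrite !actrM ?groupM ?nG //.
rewrite (aswap (u ^@ x ^@ y) Hy Hx) (aswap (u ^@ x) Hy Hx) acube //.
rewrite (aswap u Hy Hx) (aswap (u ^@ y) Hy Hx) (aswap u Hy Hx).
exact: zt3.
Qed.

Lemma Dall (u : V) x y : x \in G -> y \in G -> x ^+ 3 \in M -> y ^+ 3 \in M ->
  Dm x (Dm y (Dm (x * y) (Dm (x * y ^+ 2) u))) = 0%R.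
Proof.
move=> Hx Hy H3x H3y; rewrite Dkey // (DB y) DJ // (DN _ Hy) // act0r subr0.
by rewrite DD // DN // D0.
Qed.

Lemma fmod_comm v g : v \in M -> g \in G -> fmod cMM [~ v, g] = Dm g (fmod cMM v).
Proof.
move=> Hv Hg; rewrite commgEl fmodM ?groupV ?MJ // fmodV fmodJ ?nG //.
by rewrite /Dm addrC.
Qed.

Lemma comm4 m x y : m \in M -> x \in G -> y \in G -> x ^+ 3 \in M -> y ^+ 3 \in M ->
  [~ [~ [~ [~ m, x * y ^+ 2], x * y], y], x] = 1.
Proof.
move=> Hm Hx Hy H3x H3y.
have Hxy : x * y \in G by rewrite groupM.
have Hxy2 : x * y ^+ 2 \in G by rewrite groupM ?groupX.
have Hw : [~ [~ [~ [~ m, x * y ^+ 2], x * y], y], x] \in M by rewrite !commM.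
rewrite -(fmodK cMM Hw) !fmod_comm ?commM // Dall //.
Qed.


Definition cm (g : gT) := fun v : gT => [~ v, g].

Lemma cm_morph g : g \in G -> {in M &, {morph cm g : a b / a * b}}.
Proof.
move=> Hg a b Ha Hb; rewrite /cm commMgJ; congr (_ * _).
by apply: fixM => //; apply: commM.
Qed.

Definition cmm g (Hg : g \in G) : {morphism M >-> gT} := Morphism (cm_morph Hg).

Lemma im_sub g (Hg : g \in G) (B : {set gT}) : B \subset M -> cmm Hg @* B \subset M.
Proof.
move=> sBM; rewrite morphimEsub //; apply/subsetP => _ /imsetP[v Hv ->].
by apply: commM => //; apply: (subsetP sBM).
Qed.


Lemma kerH g (Hg : g \in G) :
  (#|'ker_M (cmm Hg)| <= #|(<[g]> <*> M) / (<[g]> <*> M)^`(1)|)%N.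
Proof.
set H := (<[g]> <*> M)%G; set Im := (cmm Hg @* M)%G.
have sImM : Im \subset M by apply: im_sub.
have ImE : (Im : {set gT}) = cm g @: M by rewrite /= morphimEsub.
have nImM : M \subset 'N(Im).
  exact: subset_trans (subset_trans cMM (centS sImM)) (cent_sub Im).
have nImg : g \in 'N(Im).
  apply/normP/eqP; rewrite eqEcard cardJg leqnn andbT.
  apply/subsetP => z; rewrite mem_conjg !ImE => /imsetP[v Hv Hz].
  rewrite -(conjgKV g z) Hz /= /cm conjRg.
  have -> : g ^ g = g by rewrite /conjg mulKg.
  by apply/imsetP; exists (v ^ g) => //; apply: MJ.
have nImH : H \subset 'N(Im) by rewrite join_subG cycle_subG nImg nImM.
have abH : abelian (H / Im).
  rewrite /H quotientY ?cycle_subG // abelianY quotient_abelian ?cycle_abelian //.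
  rewrite quotient_abelian //= quotient_cycle // centsC cycle_subG.
  rewrite -sub1set -quotient_set1 //; apply: quotient_cents2r.
  rewrite gen_subG; apply/subsetP => _ /imset2P[a b /set1P -> Hb ->].
  by rewrite -invgR groupV ImE; apply/imsetP; exists b.
have sH'Im : H^`(1) \subset Im by apply: der1_min.
have e1 := card_ker_im (cmm Hg) (subxx M).
have e2 : #|H / H^`(1)| = #|H : H^`(1)| by rewrite card_quotient // der_norm.
have e3 := Lagrange (der_sub 1 H).
have l1 : (#|M| <= #|H|)%N := subset_leq_card (joing_subr _ _).
have l2 : (#|H^`(1)| <= #|Im|)%N := subset_leq_card sH'Im.
rewrite -(leq_pmul2r (cardG_gt0 Im)) -e1 (leq_trans l1) // -e3 e2.
by rewrite mulnC leq_mul2l l2 orbT.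
Qed.

Lemma step g (Hg : g \in G) (B : {group gT}) : B \subset M ->
  (#|B| <= #|'ker_M (cmm Hg)| * #|cmm Hg @* B|)%N.
Proof.
move=> sBM; rewrite {1}(card_ker_im (cmm Hg) sBM) leq_mul2r.
by rewrite subset_leq_card ?orbT // setSI.
Qed.

Lemma chain x y (Hx : x \in G) (Hy : y \in G) (Hxy : x * y \in G)
  (Hxy2 : x * y ^+ 2 \in G) : x ^+ 3 \in M -> y ^+ 3 \in M ->
  (#|M| <= #|'ker_M (cmm Hxy2)| * (#|'ker_M (cmm Hxy)| *
     (#|'ker_M (cmm Hy)| * (#|'ker_M (cmm Hx)| * 1))))%N.
Proof.
move=> H3x H3y.
set B1 := (cmm Hxy2 @* M)%G; set B2 := (cmm Hxy @* B1)%G.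
set B3 := (cmm Hy @* B2)%G; set B4 := (cmm Hx @* B3)%G.
have sB1 : B1 \subset M by apply: im_sub.
have sB2 : B2 \subset M by apply: im_sub.
have sB3 : B3 \subset M by apply: im_sub.
have sB4 : (#|B4| <= 1)%N.
  rewrite -(cards1 (1 : gT)) subset_leq_card //; apply/subsetP => z.
  rewrite /B4 /= morphimEsub // => /imsetP[w3 + ->].
  rewrite /B3 /= morphimEsub // => /imsetP[w2 + ->].
  rewrite /B2 /= morphimEsub // => /imsetP[w1 + ->].
  rewrite /B1 /= morphimEsub // => /imsetP[m Hm ->].
  by rewrite /= /cm comm4 // inE.
apply: (leq_trans (step Hxy2 (subxx M))); apply: leq_mul => //.
apply: (leq_trans (step Hxy sB1)); apply: leq_mul => //.
apply: (leq_trans (step Hy sB2)); apply: leq_mul => //.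
apply: (leq_trans (step Hx sB3)); exact: leq_mul.
Qed.

End Core.

Lemma logn_prod_seq p (t : seq nat) : all (fun m => 0 < m)%N t ->
  logn p (\prod_(m <- t) m) = sumn (map (logn p) t).
Proof.
elim: t => [|m t IH] /=; first by rewrite big_nil logn1.
case/andP=> Hm Ht; rewrite big_cons lognM ?IH //.
by rewrite big_seq prodn_cond_gt0 // => i Hi; exact: (allP Ht i Hi).
Qed.

Lemma card_abtype (p : nat) (gT : finGroupType) (A : {group gT}) :
  abelian A -> p.-group A -> #|A| = (p ^ sumn (log_abelian_type p A))%N.
Proof.
move=> cA pA; rewrite {1}(card_pgroup pA); congr (_ ^ _)%N.
have [b defA deft] := abelian_structure cA.
rewrite /log_abelian_type -logn_prod_seq; last first.
  by apply/allP => m Hm; apply: ltnW; apply: (allP (abelian_type_gt1 A)).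
rewrite -(bigdprod_card defA) -deft big_map.
by congr (logn _ _); apply: eq_bigr => x _; rewrite -orderE.
Qed.

Lemma abtype_head (gT : finGroupType) (A : {group gT}) :
  abelian_type A = [::] \/ exists t, abelian_type A = exponent A :: t.
Proof.
rewrite /abelian_type genGidG; case: #|A| => [|n] /=; first by left.
by case: ifP => _; [right; eexists | left].
Qed.

Lemma sum_in (s : seq (seq nat)) t : t \in s -> (sumn t <= \sum_(u <- s) sumn u)%N.
Proof.
elim: s => [|a s IH] //=; rewrite in_cons big_cons => /orP[/eqP -> | Ht].
  exact: leq_addr.
exact: leq_trans (IH Ht) (leq_addl _ _).
Qed.

Definition Sb (tau : 4.-tuple (seq nat)) := (\sum_(u <- tau) sumn u)%N.

Lemma bound (tau : 4.-tuple (seq nat)) (gT : finGroupType) (G : {group gT}) :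
  in_Cnt 3 tau G -> (#|G| <= 9 * (3 ^ Sb tau) ^ 4)%N.
Proof.
case=> pG dG2 tG tm.
set M := (G^`(1))%G.
have cMM : abelian M by apply/derG1P.
have nMG : G \subset 'N(M) := der_norm 1 G.
have sDM : [~: G, G] \subset M := subxx _.
have pQ : 3.-group (G / M) := quotient_pgroup _ pG.
have aQ : abelian (G / M) := der_abelian 0 G.
have cQ : #|G / M| = 9%N by rewrite (card_abtype aQ pQ) tG.
have cGM : #|G : M| = 9%N by rewrite -card_quotient.
have eQ : exponent (G / M) = 3%N.
  have dv : (exponent (G / M) %| 9)%N by rewrite -cQ exponent_dvdn.
  case: (abtype_head (G / M)%G) => [h|[t h]]; move: tG; rewrite /log_abelian_type h //=.
  case=> e1 _; move: dv; rewrite dvdn_divisors // !inE.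
  by case/or3P => /eqP he; rewrite he in e1 *.
have cube : forall g, g \in G -> g ^+ 3 \in M.
  move=> g Hg; have nMg := subsetP nMG g Hg.
  apply: coset_idr; first by rewrite groupX.
  by rewrite morphX // -eQ expg_exponent // mem_quotient.
have idx : forall g, g \in G -> g \notin M -> #|G : <[g]> <*> M| = 3%N.
  move=> g Hg Hng; have nMg := subsetP nMG g Hg.
  have ocg : #[coset M g] = 3%N.
    have h3 : coset M (g ^+ 3) = 1 := coset_id (cube g Hg).
    rewrite morphX // in h3.
    have : (#[coset M g] %| 3)%N by rewrite order_dvdn h3.
    rewrite dvdn_divisors // !inE => /orP[/eqP h1|/eqP //].
    move/eqP: h1; rewrite order_eq1 => /eqP h1.
    by case/negP: Hng; apply: coset_idr.
  have sHG : <[g]> <*> M \subset G by rewrite join_subG cycle_subG Hg der_sub.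
  have cHM : #|<[g]> <*> M : M| = 3%N.
    rewrite -card_quotient; last by rewrite join_subG cycle_subG nMg normG.
    by rewrite quotientYidr ?cycle_subG // quotient_cycle.
  have := Lagrange_index sHG (joing_subr _ _); rewrite cHM cGM => h.
  by apply/eqP; rewrite -(eqn_pmul2r (_ : 0 < 3)%N) // h.
have inL : forall g, g \in G -> g \notin M -> (<[g]> <*> M)%G \in Lyr 3 1 G.
  move=> g Hg Hng; rewrite inE /= joing_subr join_subG cycle_subG Hg der_sub.
  by rewrite idx.
have bnd : forall g (Hg : g \in G), g \notin M ->
    (#|'ker_M (cmm nMG cMM Hg)| <= 3 ^ Sb tau)%N.
  move=> g Hg Hng; apply: (leq_trans (kerH nMG cMM Hg)).
  set H := (<[g]> <*> M)%G.
  have sHG : H \subset G by rewrite join_subG cycle_subG Hg der_sub.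
  have aH : abelian (H / H^`(1)) := der_abelian 0 H.
  have pH : 3.-group (H / H^`(1)) := quotient_pgroup _ (pgroupS sHG pG).
  rewrite (card_abtype aH pH) leq_pexp2l //.
  set t := log_abelian_type 3 (H / H^`(1)).
  apply: sum_in; rewrite -has_pred1 has_count -tm.
  by apply/card_gt0P; exists H; rewrite inE inL // eqxx.
have [x Hx Hnx] : exists2 x, x \in G & x \notin M.
  by apply/subsetPn; rewrite -indexg_eq1 cGM.
have [y Hy Hny] : exists2 y, y \in G & y \notin <[x]> <*> M.
  by apply/subsetPn; rewrite -indexg_eq1 idx.
have sMX : M \subset <[x]> <*> M := joing_subr _ _.
have Xx : x \in <[x]> <*> M := subsetP (joing_subl _ _) x (cycle_id x).
have Hnym : y \notin M by apply: contra Hny; apply: (subsetP sMX).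
have Hxy : x * y \in G by rewrite groupM.
have Hxy2 : x * y ^+ 2 \in G by rewrite groupM ?groupX.
have Hnxy : x * y \notin M.
  apply: contra Hny => h; have -> : y = x^-1 * (x * y) by rewrite mulKg.
  by rewrite groupM ?groupV // (subsetP sMX).
have Hnxy2 : x * y ^+ 2 \notin M.
  apply: contra Hny => h.
  have -> : y = (x^-1 * (x * y ^+ 2))^-1 * y ^+ 3 by rewrite mulKg (expgSr y 2) mulKg.
  apply: groupM; last by apply: (subsetP sMX); apply: cube.
  by rewrite groupV; apply: groupM; [rewrite groupV | apply: (subsetP sMX)].
have := chain nMG sDM cMM Hx Hy Hxy Hxy2 (cube x Hx) (cube y Hy).
have b1 := bnd _ Hxy2 Hnxy2; have b2 := bnd _ Hxy Hnxy.
have b3 := bnd _ Hy Hnym; have b4 := bnd _ Hx Hnx.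
move=> hc; rewrite -(Lagrange (der_sub 1 G)) -/M cGM mulnC leq_mul2l /=.
apply: (leq_trans hc); rewrite !expnS expn0.
by repeat apply: leq_mul.
Qed.
Definition rep_of (n k : nat) : {gT : finGroupType & {group gT}} :=
  existT (fun gT : finGroupType => {group gT}) (perm_of 'I_n)
    (nth 1%G (enum {group {perm 'I_n}}) k).

Section Cay.
Variable T : finGroupType.
Definition cayf (g : T) (i : 'I_#|T|) : 'I_#|T| := enum_rank (enum_val i * g).
Lemma cayf_inj g : injective (cayf g).
Proof. by move=> i j /enum_rank_inj /mulIg /enum_val_inj. Qed.
Definition cay (g : T) : {perm 'I_#|T|} := perm (@cayf_inj g).
Lemma cayM : {in [set: T] &, {morph cay : a b / a * b}}.
Proof.
by move=> a b _ _; apply/permP => i; rewrite permM !permE /cayf enum_rankK mulgA.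
Qed.
Definition caym : {morphism [set: T] >-> {perm 'I_#|T|}} := Morphism cayM.
Lemma injm_cay : 'injm caym.
Proof.
apply/injmP => a b _ _ /= /permP /(_ (enum_rank 1)).
by rewrite !permE /cayf !enum_rankK !mul1g => /enum_rank_inj.
Qed.
Lemma isog_cay : [set: T] \isog caym @* [set: T].
Proof. exact: sub_isog (subxx _) injm_cay. Qed.
End Cay.

Theorem theorem5p2 (tau : 4.-tuple (seq nat)) :
  exists (n : nat) (reps : nat -> {gT : finGroupType & {group gT}}),
    forall (gT : finGroupType) (G : {group gT}),
      in_Cnt 3 tau G ->
      exists2 i, (i < n)%N & (G \isog (projT2 (reps i)))%g.
Proof.
set N := (9 * (3 ^ Sb tau) ^ 4)%N.
set Bd := (\max_(n < N.+1) #|{group {perm 'I_n}}|).+1.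
exists (N.+1 * Bd)%N, (fun i => rep_of (i %/ Bd) (i %% Bd)).
move=> gT G HG; have hG := bound HG.
pose T := subg_of G.
have cT : #|T| = #|G| by rewrite -cardsT -(card_isog (isog_subg G)).
set K := (caym T @* [set: T])%G.
set s := enum {group {perm 'I_#|T|}}.
have Ks : K \in s by rewrite mem_enum.
set k := index K s.
have kB : (k < Bd)%N.
  have hk : (k < size s)%N by rewrite index_mem.
  rewrite ltnS; apply: leq_trans (ltnW hk) _.
  rewrite /s -cardE.
  have hn : (#|T| < N.+1)%N by rewrite ltnS cT.
  exact: (@leq_bigmax _ (fun n : 'I_N.+1 => #|{group {perm 'I_n}}|) (Ordinal hn)).
exists (#|T| * Bd + k)%N.
  have hn : (#|T| <= N)%N by rewrite cT.
  nia.
have Bd0 : (0 < Bd)%N by [].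
rewrite divnMDl // divn_small // addn0 modnMDl modn_small //= nth_index //.
exact: isog_trans (isog_subg G) (isog_cay T).
Qed.
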